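(* Let $A$ be a bounded distributive lattice, $X$ its Priestley space, and $\kappa$ a regular cardinal. (1) $A$ is a complete lattice that is a $\kappa$-frame if and only if $X$ is extremally order disconnected and ${\sf cl}(U)$ is a clopen upset for each $\kappa$-clopen upset $U$. (2) $A$ is a $\kappa$-complete Heyting lattice if and only if $X$ is an Esakia space and ${\sf cl}(U)$ is a clopen upset for each $\kappa$-clopen upset $U$. (3) Every relative annihilator of $A$ belongs to $\mathcal{BL}_\kappa A$ if and only if $X\setminus{\downarrow}U\in{\sf BL}_\kappa(X)$ for each clopen $U\subseteq X$. (4) Every relative annihilator of $A$ is a normal ideal belonging to $\mathcal{BL}_\kappa A$ if and only if $X\setminus{\downarrow}U\in{\sf DM}(X)\cap{\sf BL}_\kappa(X)$ for each clopen $U\subseteq X$.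
   Context: A $\kappa$-frame is a lattice in which all joins of fewer than $\kappa$ elements exist and are distributive ($a\wedge\bigvee S=\bigvee\{a\wedge s\}$); $\kappa$-complete means such joins exist; a Heyting lattice has $\to$ with $a\wedge b\le c\iff a\le b\to c$. A relative annihilator is $\langle a,b\rangle=\{x:a\wedge x\le b\}$; a normal ideal is a downset $N=N^{u\ell}$. $\mathcal{BL} A$ is the frame of D-ideals (downsets containing $\bigvee S$ for each subset $S$ with distributive join), with $A$ identified with its principal downsets, and $\mathcal{BL}_\kappa A$ is the sub-$\kappa$-frame of $\mathcal{BL} A$ generated by $A$. The Priestley space $X$ of $A$ is the set of prime filters ordered by inclusion, with topology generated by $\{\mathfrak s(a)\setminus\mathfrak s(b)\}$, $\mathfrak s(a)=\{x:a\in x\}$. ${\sf cl}$ is topological closure, ${\sf cl_2}(S)={\uparrow}{\sf cl}(S)$, ${\sf int_1}(S)=X\setminus{\downarrow}(X\setminus{\sf int}(S))$. A DM-set is an open upset $U$ with ${\sf int_1\,cl_2}(U)=U$; ${\sf DM}(X)$ is the set of DM-sets. A $\kappa$-clopen upset is a union of fewer than $\kappa$ clopen upsets; ${\sf BL}_\kappa(X)=\{{\sf int_1\,cl}(V): V\text{ a }\kappa\text{-clopen upset}\}$. $X$ is extremally order disconnected if ${\sf cl_2}(U)$ is clopen for every open upset $U$; $X$ is an Esakia space if ${\downarrow}U$ is clopen for every clopen $U\subseteq X$. *)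

(* Defs.v *)
From HB Require Import structures.
From mathcomp Require Import all_boot all_order.
Set Implicit Arguments. Unset Strict Implicit. Unset Printing Implicit Defensive.
Import Order.Theory.
Local Open Scope order_scope.

(* ---------- cardinals, represented by a type K of cardinality kappa ---------- *)

Definition lt_card (T : Type) (S : T -> Prop) (K : Type) : Prop :=
  (exists f : T -> K, forall x y, S x -> S y -> f x = f y -> x = y) /\
  ~ (exists g : K -> T, (forall k l, g k = g l -> k = l) /\ (forall k, S (g k))).

Definition bigcupP (T : Type) (F : (T -> Prop) -> Prop) : T -> Prop :=
  fun x => exists U, F U /\ U x.

Definition regular_card (K : Type) : Prop :=
  (exists f : nat -> K, forall m n, f m = f n -> m = n) /\
  forall (T : Type) (F : (T -> Prop) -> Prop),
    lt_card F K -> (forall S, F S -> lt_card S K) -> lt_card (bigcupP F) K.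

Section Lattice.
Variables (d : Order.disp_t) (A : tbDistrLatticeType d) (K : Type).

Definition is_join (S : A -> Prop) (a : A) : Prop :=
  (forall s, S s -> s <= a) /\ (forall b, (forall s, S s -> s <= b) -> a <= b).

Definition has_join (S : A -> Prop) : Prop := exists a, is_join S a.

Definition dist_join_at (S : A -> Prop) (a : A) : Prop :=
  is_join S a /\
  forall b, is_join (fun c => exists s, S s /\ c = b `&` s) (b `&` a).

Definition complete_lattice : Prop := forall S : A -> Prop, has_join S.

Definition kappa_complete : Prop :=
  forall S : A -> Prop, lt_card S K -> has_join S.

Definition kappa_frame : Prop :=
  forall S : A -> Prop, lt_card S K -> exists a, dist_join_at S a.

Definition heyting_lattice : Prop :=
  forall b c : A, exists i : A, forall a : A, (a `&` b <= c) <-> (a <= i).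

Definition rel_ann (a b : A) : A -> Prop := fun x => a `&` x <= b.

Definition downset (S : A -> Prop) : Prop := forall x y, y <= x -> S x -> S y.

Definition upper_bounds (S : A -> Prop) : A -> Prop :=
  fun u => forall s, S s -> s <= u.
Definition lower_bounds (S : A -> Prop) : A -> Prop :=
  fun l => forall s, S s -> l <= s.

Definition normal_ideal (N : A -> Prop) : Prop :=
  downset N /\ N = lower_bounds (upper_bounds N).

Definition D_ideal (D : A -> Prop) : Prop :=
  downset D /\
  forall (S : A -> Prop) (a : A), (forall s, S s -> D s) -> dist_join_at S a -> D a.

Definition principal (a : A) : A -> Prop := fun x => x <= a.

Definition BL_join (F : (A -> Prop) -> Prop) : A -> Prop :=
  fun x => forall D, D_ideal D -> (forall I, F I -> forall y, I y -> D y) -> D x.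

Definition BL_meet (D E : A -> Prop) : A -> Prop := fun x => D x /\ E x.

Definition sub_kframe_containing_A (G : (A -> Prop) -> Prop) : Prop :=
  (forall D, G D -> D_ideal D) /\
  (forall a, G (principal a)) /\
  (forall D E, G D -> G E -> G (BL_meet D E)) /\
  (forall F, (forall D, F D -> G D) -> lt_card F K -> G (BL_join F)).

Definition BLk (D : A -> Prop) : Prop :=
  forall G, sub_kframe_containing_A G -> G D.

Definition prime_filter (x : A -> Prop) : Prop :=
  x \top /\
  (forall a b, a <= b -> x a -> x b) /\
  (forall a b, x a -> x b -> x (a `&` b)) /\
  ~ x \bot /\
  (forall a b, x (a `|` b) -> x a \/ x b).

Definition pspace : Type := {x : A -> Prop | prime_filter x}.

Definition pf_le (x y : pspace) : Prop := forall a, proj1_sig x a -> proj1_sig y a.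

Definition sset (a : A) : pspace -> Prop := fun x => proj1_sig x a.

Definition basic (a b : A) : pspace -> Prop := fun x => sset a x /\ ~ sset b x.

Definition complP (S : pspace -> Prop) : pspace -> Prop := fun x => ~ S x.

Definition is_open (U : pspace -> Prop) : Prop :=
  forall x, U x -> exists a b, basic a b x /\ forall y, basic a b y -> U y.
Definition is_closed (S : pspace -> Prop) : Prop := is_open (complP S).
Definition clopen (U : pspace -> Prop) : Prop := is_open U /\ is_closed U.

Definition cl (S : pspace -> Prop) : pspace -> Prop :=
  fun x => forall a b, basic a b x -> exists y, S y /\ basic a b y.
Definition int (S : pspace -> Prop) : pspace -> Prop :=
  fun x => exists a b, basic a b x /\ forall y, basic a b y -> S y.

Definition upsetX (U : pspace -> Prop) : Prop := forall x y, pf_le x y -> U x -> U y.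
Definition up (S : pspace -> Prop) : pspace -> Prop :=
  fun y => exists x, S x /\ pf_le x y.
Definition down (S : pspace -> Prop) : pspace -> Prop :=
  fun y => exists x, S x /\ pf_le y x.

Definition cl2 (S : pspace -> Prop) : pspace -> Prop := up (cl S).
Definition int1 (S : pspace -> Prop) : pspace -> Prop :=
  complP (down (complP (int S))).

Definition DM_set (U : pspace -> Prop) : Prop :=
  is_open U /\ upsetX U /\ int1 (cl2 U) = U.

Definition kclopen_upset (V : pspace -> Prop) : Prop :=
  exists F : (pspace -> Prop) -> Prop,
    lt_card F K /\ (forall U, F U -> clopen U /\ upsetX U) /\ V = bigcupP F.

Definition BLkX (W : pspace -> Prop) : Prop :=
  exists V, kclopen_upset V /\ W = int1 (cl V).

Definition extremally_order_disconnected : Prop :=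
  forall U, is_open U -> upsetX U -> clopen (cl2 U).

Definition esakia_space : Prop :=
  forall U, clopen U -> clopen (down U).

End Lattice.

(* Main.v *)
Require Import Defs.
From HB Require Import structures.
From mathcomp Require Import all_boot all_order.
From mathcomp Require boolp classical_sets.
From Stdlib Require Import Classical FunctionalExtensionality PropExtensionality ClassicalEpsilon List.
Set Implicit Arguments. Unset Strict Implicit. Unset Printing Implicit Defensive.

Section Zorn2.
Variable T : Type.
Variable Good : list T -> list T -> Prop.
Hypothesis Gmono : forall p n p' n', Good p n ->
  (forall x, In x p' -> In x p) -> (forall x, In x n' -> In x n) -> Good p' n'.
Hypothesis Gsplit : forall p n a, Good p n -> Good (a::p) n \/ Good p (a::n).
Hypothesis G0 : Good nil nil.

Definition ConsP (P N : T -> Prop) := forall p n,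
  (forall x, In x p -> P x) -> (forall x, In x n -> N x) -> Good p n.

Let U := {pn : (T->Prop)*(T->Prop) | ConsP pn.1 pn.2}.
Let R (s t : U) : bool := boolp.asbool
   ((forall x, (proj1_sig s).1 x -> (proj1_sig t).1 x) /\
    (forall x, (proj1_sig s).2 x -> (proj1_sig t).2 x)).

Let Rp s t : R s t <-> ((forall x, (proj1_sig s).1 x -> (proj1_sig t).1 x) /\
    (forall x, (proj1_sig s).2 x -> (proj1_sig t).2 x)).
Proof. by split => [/boolp.asboolP|H]; [|apply/boolp.asboolP]. Qed.

Lemma list_in_chain (C : U -> Prop) (f : U -> T -> Prop) :
  classical_sets.total_on C (fun s t => R s t) ->
  (forall s t x, R s t -> f s x -> f t x) ->
  forall l, (forall x, In x l -> exists t, C t /\ f t x) ->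
  (forall x, In x l -> False) \/ exists t, C t /\ forall x, In x l -> f t x.
Proof.
move=> tot fm; elim=> [|a l IH] H; first by left.
have [t1 [Ct1 ft1]] := H a (or_introl erefl).
have [Hl|[t2 [Ct2 ft2]]] := IH (fun x hx => H x (or_intror hx)).
  right; exists t1; split=> // x [<-//|/Hl[]].
have [r12|r21] := tot _ _ Ct1 Ct2.
  right; exists t2; split=> // x [<-|/ft2//]; exact: fm r12 ft1.
right; exists t1; split=> // x [<-//|/ft2]; exact: fm r21.
Qed.

Lemma cut_list (P : T -> Prop) a l : (forall x, In x l -> P x \/ x = a) ->
  exists l', (forall x, In x l' -> P x) /\ (forall x, In x l -> In x (a :: l')).
Proof.
elim: l => [|b l IH] H; first by exists nil; split=> // x [].
have [l' [H1 H2]] := IH (fun x hx => H x (or_intror hx)).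
have [Pb|->] := H b (or_introl erefl).
  exists (b :: l'); split; first by move=> x [<-|/H1].
  move=> x [<-|/H2 [<-|h]]; [right;left| left| right;right]=> //.
exists l'; split=> // x [<-|/H2//]; by left.
Qed.

Lemma total_good : exists P : T -> Prop, ConsP P (fun x => ~ P x).
Proof.
pose F0 := ((fun _ : T => False), (fun _ : T => False)).
have c0 : ConsP F0.1 F0.2.
  move=> p n /= Hp Hn; apply: (Gmono G0) => x hx; [case: (Hp x hx)|case: (Hn x hx)].
have Rrefl : forall t, R t t by move=> t; apply/Rp; split.
have Rtr : forall r s t, R r s -> R s t -> R r t.
  move=> r s t /Rp [h1 h2] /Rp [h3 h4]; apply/Rp; split=> x hx; auto.
have chain : forall C : classical_sets.set U,
    classical_sets.total_on C (fun s t => R s t) -> exists t, forall s, C s -> R s t.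
  move=> C tot.
  pose P x := exists t, C t /\ (proj1_sig t).1 x.
  pose N x := exists t, C t /\ (proj1_sig t).2 x.
  have cPN : ConsP P N.
    move=> p n Hp Hn.
    have [Fp|[t1 [Ct1 f1]]] := list_in_chain tot
        (fun s t x r => proj1 (proj1 (Rp s t) r) x) Hp;
    have [Fn|[t2 [Ct2 f2]]] := list_in_chain tot
        (fun s t x r => proj2 (proj1 (Rp s t) r) x) Hn.
    - apply: (Gmono G0) => x hx; [case: (Fp x hx)|case: (Fn x hx)].
    - case: t2 Ct2 f2 => [[P2 N2] c2] /= _ f2; apply: c2 => //= x /Fp [].
    - case: t1 Ct1 f1 => [[P1 N1] c1] /= _ f1; apply: c1 => //= x /Fn [].
    - have [r12|r21] := tot _ _ Ct1 Ct2.
        case: t2 Ct2 f2 r12 => [[P2 N2] c2] /= _ f2 /Rp [/= h1 _].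
        by apply: c2 => //= x /f1 /h1.
      case: t1 Ct1 f1 r21 => [[P1 N1] c1] /= _ f1 /Rp [/= _ h2].
      by apply: c1 => //= x /f2 /h2.
  exists (exist _ (P, N) cPN) => s Cs; apply/Rp; split=> x hx /=.
    by exists s. by exists s.
have [t tmax] := @classical_sets.ZL_preorder U (exist (fun pn => ConsP pn.1 pn.2) F0 c0) R Rrefl Rtr chain.
case: t tmax => [[P N] cPN] /= tmax.
have PN : forall a, P a \/ N a.
  move=> a; apply: NNPP => /not_or_and [nPa nNa].
  have : ConsP (fun x => P x \/ x = a) N \/ ConsP P (fun x => N x \/ x = a).
    apply: NNPP => /not_or_and [h1 h2].
    move/not_all_ex_not: h1 => [p1 /not_all_ex_not [n1 h1]].
    move/not_all_ex_not: h2 => [p2 /not_all_ex_not [n2 h2]].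
    have hp1 := not_imply_elim _ _ h1; have hn1 := not_imply_elim _ _ (not_imply_elim2 _ _ h1).
    have g1 := not_imply_elim2 _ _ (not_imply_elim2 _ _ h1).
    have hp2 := not_imply_elim _ _ h2; have hn2 := not_imply_elim _ _ (not_imply_elim2 _ _ h2).
    have g2 := not_imply_elim2 _ _ (not_imply_elim2 _ _ h2).
    have [p1' [Hp1' Ip1]] := cut_list hp1.
    have [n2' [Hn2' In2]] := cut_list hn2.
    have G : Good (p1' ++ p2) (n1 ++ n2').
      apply: (cPN (p1' ++ p2) (n1 ++ n2')) => x hx; by case: (in_app_or _ _ _ hx) => ? /=; auto.
    case: (Gsplit a G) => G'.
      apply: g1; apply: (Gmono G') => x.
        move/Ip1 => [<-|h]; [left|right]=> //; apply: in_or_app; auto.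
      by move=> h; apply: in_or_app; auto.
    apply: g2; apply: (Gmono G') => x.
      by move=> h; apply: in_or_app; auto.
    move/In2 => [<-|h]; [left|right]=> //; apply: in_or_app; auto.
  case=> c.
    have r : R (exist (fun pn => ConsP pn.1 pn.2) (P, N) cPN)
               (exist (fun pn => ConsP pn.1 pn.2) ((fun x => P x \/ x = a), N) c).
      by apply/Rp; split=> x /= hx; auto.
    have /Rp [/= h _] := tmax _ r; exact: nPa (h a (or_intror erefl)).
  have r : R (exist (fun pn => ConsP pn.1 pn.2) (P, N) cPN)
             (exist (fun pn => ConsP pn.1 pn.2) (P, (fun x => N x \/ x = a)) c).
    by apply/Rp; split=> x /= hx; auto.
  have /Rp [/= _ h] := tmax _ r; exact: nNa (h a (or_intror erefl)).
exists P => p n Hp Hn; apply: (cPN p n) => // x /Hn nP; by case: (PN x).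
Qed.
End Zorn2.

Import Order.Theory.
Local Open Scope order_scope.

Lemma pext (T : Type) (P Q : T -> Prop) : (forall x, P x <-> Q x) -> P = Q.
Proof. move=> H; apply: functional_extensionality => x; exact: propositional_extensionality. Qed.

Lemma inapp (T : Type) (l l' : list T) x : In x (l ++ l') -> In x l \/ In x l'.
Proof. exact: in_app_or. Qed.

Section Lat.
Variables (d : Order.disp_t) (A : tbDistrLatticeType d).
Implicit Types (a b c : A) (l : list A).
Local Notation X := (pspace A).

Definition mt l : A := List.fold_right (fun x y => x `&` y) \top l.
Definition jn l : A := List.fold_right (fun x y => x `|` y) \bot l.

Lemma mt_le l x : In x l -> mt l <= x.
Proof.
elim: l => [//|y l IH] /= [->|h]; first exact: leIl.
exact: le_trans (leIr _ _) (IH h).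
Qed.

Lemma le_mt l y : (forall x, In x l -> y <= x) -> y <= mt l.
Proof.
elim: l => [|z l IH] H /=; first exact: lex1.
rewrite lexI (H z (or_introl erefl)) IH // => x hx; exact: H x (or_intror hx).
Qed.

Lemma le_jn l x : In x l -> x <= jn l.
Proof.
elim: l => [//|y l IH] /= [->|h]; first exact: leUl.
exact: le_trans (IH h) (leUr _ _).
Qed.

Lemma jn_le l y : (forall x, In x l -> x <= y) -> jn l <= y.
Proof.
elim: l => [|z l IH] H /=; first exact: le0x.
rewrite leUx (H z (or_introl erefl)) IH // => x hx; exact: H x (or_intror hx).
Qed.

Lemma mt_sub l l' : (forall x, In x l' -> In x l) -> mt l <= mt l'.
Proof. by move=> H; apply: le_mt => x /H; apply: mt_le. Qed.

Lemma jn_sub l l' : (forall x, In x l' -> In x l) -> jn l' <= jn l.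
Proof. by move=> H; apply: jn_le => x /H; apply: le_jn. Qed.

Lemma mt_app l l' : mt (l ++ l') = mt l `&` mt l'.
Proof. elim: l => [|x l IH] /=; [by rewrite meet1x | by rewrite IH meetA]. Qed.

Lemma jn_app l l' : jn (l ++ l') = jn l `|` jn l'.
Proof. elim: l => [|x l IH] /=; [by rewrite join0x | by rewrite IH joinA]. Qed.

Lemma cut_le a m j : m <= a `|` j -> m `&` a <= j -> m <= j.
Proof.
move=> h1 h2.
have -> : m = m `&` (a `|` j) by apply/eqP; rewrite eq_le leIl lexI lexx h1.
by rewrite meetUr leUx h2 leIr.
Qed.

Section PF.
Variable x : X.
Let P := proj1_sig x.
Let pfx : prime_filter P := proj2_sig x.

Lemma pf_top : sset \top x.
Proof. by case: pfx. Qed.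
Lemma pf_up a b : a <= b -> sset a x -> sset b x.
Proof. by case: pfx => _ [h _]; apply: h. Qed.
Lemma pf_meet a b : sset a x -> sset b x -> sset (a `&` b) x.
Proof. by case: pfx => _ [_ [h _]]; apply: h. Qed.
Lemma pf_bot : ~ sset \bot x.
Proof. by case: pfx => _ [_ [_ [h _]]]. Qed.
Lemma pf_join a b : sset (a `|` b) x -> sset a x \/ sset b x.
Proof. by case: pfx => _ [_ [_ [_ h]]]; apply: h. Qed.

Lemma sset_meet a b : sset (a `&` b) x <-> sset a x /\ sset b x.
Proof.
split=> [h|[h1 h2]]; last exact: pf_meet.
by split; apply: pf_up h; [apply: leIl | apply: leIr].
Qed.

Lemma sset_join a b : sset (a `|` b) x <-> sset a x \/ sset b x.
Proof.
split=> [/pf_join //|[h|h]]; apply: pf_up h; [apply: leUl | apply: leUr].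
Qed.

Lemma pf_mt l : (forall a, In a l -> sset a x) -> sset (mt l) x.
Proof.
elim: l => [|a l IH] H /=; first exact: pf_top.
apply: pf_meet; [apply: H; left | apply: IH => b hb; apply: H; right] => //.
Qed.

Lemma pf_jn l : sset (jn l) x -> exists a, In a l /\ sset a x.
Proof.
elim: l => [|a l IH] /=; first by move/pf_bot.
case/pf_join=> [h|/IH [b [hb h]]]; [exists a | exists b]; split; auto.
Qed.
End PF.

Definition cons_pf (Pos Neg : A -> Prop) := forall p n,
  (forall a, In a p -> Pos a) -> (forall a, In a n -> Neg a) -> ~ mt p <= jn n.

Lemma prime_of_total (P : A -> Prop) :
  (forall p n, (forall a, In a p -> P a) -> (forall a, In a n -> ~ P a) -> ~ mt p <= jn n) ->
  prime_filter P.
Proof.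
move=> H.
have T1 : forall p n, (forall a, In a p -> P a) -> mt p <= jn n -> exists a, In a n /\ P a.
  move=> p n hp hle; apply: NNPP => hn; apply: (H p n hp) => // a ha Pa.
  by apply: hn; exists a.
split; [|split; [|split; [|split]]].
- have := T1 nil (\top :: nil) (fun a h => match h with end); case.
    by rewrite /= joinx0.
  by move=> a [[e|[]] Pa]; rewrite e.
- move=> a b ab Pa.
  have := T1 (a :: nil) (b :: nil); case.
  + by move=> c [<-|[]].
  + by rewrite /= meetx1 joinx0.
  + by move=> c [[e|[]] Pc]; rewrite e.
- move=> a b Pa Pb.
  have := T1 (a :: b :: nil) (a `&` b :: nil); case.
  + by move=> c [<-|[<-|[]]].
  + by rewrite /= meetx1 joinx0.
  + by move=> c [[e|[]] Pc]; rewrite e.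
- move=> Pb.
  have := T1 (\bot :: nil) nil; case.
  + by move=> c [<-|[]].
  + by rewrite /= meetx1.
  + by move=> c [[]].
- move=> a b Pab.
  have := T1 (a `|` b :: nil) (a :: b :: nil); case.
  + by move=> c [<-|[]].
  + by rewrite /= meetx1 joinx0.
  + by move=> c [[<-|[<-|[]]] Pc]; auto.
Qed.

Theorem pf_exists (Pos Neg : A -> Prop) : cons_pf Pos Neg ->
  exists x : X, (forall a, Pos a -> sset a x) /\ (forall a, Neg a -> ~ sset a x).
Proof.
move=> cPN.
pose Good p n := forall p0 n0, (forall a, In a p0 -> Pos a) -> (forall a, In a n0 -> Neg a) ->
   ~ mt (p ++ p0) <= jn (n ++ n0).
have [P HP] : exists P : A -> Prop, ConsP Good P (fun x => ~ P x).
  apply: total_good.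
  - move=> p n p' n' G hp hn p0 n0 h0 h1 hle; apply: (G p0 n0 h0 h1).
    have e1 : mt (p ++ p0) <= mt (p' ++ p0).
      apply: mt_sub => x hx; case: (inapp hx) => h; apply: in_or_app; [left; exact: hp| by right].
    have e2 : jn (n' ++ n0) <= jn (n ++ n0).
      apply: jn_sub => x hx; case: (inapp hx) => h; apply: in_or_app; [left; exact: hn| by right].
    exact: le_trans e1 (le_trans hle e2).
  - move=> p n a G; apply: NNPP => /not_or_and [h1 h2].
    move/not_all_ex_not: h1 => [p1 /not_all_ex_not [n1 h1]].
    move/not_all_ex_not: h2 => [p2 /not_all_ex_not [n2 h2]].
    have hp1 := not_imply_elim _ _ h1; have hn1 := not_imply_elim _ _ (not_imply_elim2 _ _ h1).
    have g1 := NNPP _ (not_imply_elim2 _ _ (not_imply_elim2 _ _ h1)).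
    have hp2 := not_imply_elim _ _ h2; have hn2 := not_imply_elim _ _ (not_imply_elim2 _ _ h2).
    have g2 := NNPP _ (not_imply_elim2 _ _ (not_imply_elim2 _ _ h2)).
    apply: (G (p1 ++ p2) (n1 ++ n2)).
      by move=> x hx; case: (inapp hx) => ?; auto.
      by move=> x hx; case: (inapp hx) => ?; auto.
    move: g1 g2; rewrite /= !mt_app !jn_app => g1 g2.
    apply: (cut_le (a := a)).
      apply: le_trans (le_trans (leI2 (lexx _) (leIr _ _)) g2) _.
      exact: leU2 (lexx a) (leU2 (lexx _) (leUr _ _)).
    rewrite meetC; apply: le_trans (le_trans (leI2 (lexx a) (leI2 (lexx _) (leIl _ _))) g1) _.
    exact: leU2 (lexx _) (leUl _ _).
  - move=> p0 n0 h0 h1; exact: cPN.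
have Gc : forall p n, (forall a, In a p -> P a) -> (forall a, In a n -> ~ P a) -> ~ mt p <= jn n.
  move=> p n hp hn; have := HP p n hp hn nil nil (fun _ h => match h with end) (fun _ h => match h with end).
  by rewrite ?app_nil_r ?cats0.
exists (exist _ P (prime_of_total Gc)); split=> a h /=.
  apply: NNPP => nP.
  have G := HP nil (a :: nil) (fun _ h => match h with end).
  apply: (G _ (a :: nil) nil).
  - by move=> c [<-|[]].
  - by move=> c [<-|[]].
  - by move=> c [].
  - by rewrite /= meetx1 joinx0.
move=> Pa; have G := HP (a :: nil) nil.
apply: (G _ _ nil (a :: nil)).
- by move=> c [<-|[]].
- by [].
- by [].
- by move=> c [<-|[]].
- by rewrite /= meetx1 joinx0.
Qed.
End Lat.

Import Order.Theory.
Local Open Scope order_scope.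

Section Top.
Variables (d : Order.disp_t) (A : tbDistrLatticeType d).
Implicit Types (a b c : A) (l : list A).
Local Notation X := (pspace A).
Implicit Types (x y z : X) (S U V W C : X -> Prop).

Lemma sep a b : ~ a <= b -> exists x, sset a x /\ ~ sset b x.
Proof.
move=> nab.
have cp : cons_pf (fun c => c = a) (fun c => c = b).
  move=> p n hp hn hle; apply: nab.
  have e1 : a <= mt p by apply: le_mt => c /hp ->.
  have e2 : jn n <= b by apply: jn_le => c /hn ->.
  exact: le_trans e1 (le_trans hle e2).
have [x [h1 h2]] := pf_exists cp.
by exists x; split; [apply: h1|apply: h2].
Qed.

Lemma le_sset a b : a <= b <-> forall x, sset a x -> sset b x.
Proof.
split=> [ab x|H]; first exact: pf_up.
apply: NNPP => /sep [x [h1 h2]]; exact: h2 (H x h1).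
Qed.

Lemma basic_meet a b a' b' x :
  basic (a `&` a') (b `|` b') x <-> basic a b x /\ basic a' b' x.
Proof.
rewrite /basic sset_meet sset_join; tauto.
Qed.

Lemma open_basic a b : is_open (basic a b).
Proof. by move=> x h; exists a, b. Qed.

Lemma basic_s a x : basic a \bot x <-> sset a x.
Proof. by rewrite /basic; split=> [[]//|h]; split=> //; apply: pf_bot. Qed.

Lemma basic_ns a x : basic \top a x <-> ~ sset a x.
Proof. by rewrite /basic; split=> [[]//|h]; split=> //; apply: pf_top. Qed.

Lemma open_s a : is_open (sset a).
Proof.
move=> x h; exists a, \bot; split; first by apply/basic_s.
by move=> y /basic_s.
Qed.

Lemma open_ns a : is_open (complP (sset a)).
Proof.
move=> x h; exists \top, a; split; first by apply/basic_ns.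
by move=> y /basic_ns.
Qed.

Lemma closed_s a : is_closed (sset a).
Proof. exact: open_ns. Qed.

Lemma closed_basic a b : is_closed (basic a b).
Proof.
move=> x nb; case: (classic (sset a x)) => ha.
  have hb : sset b x by apply: NNPP => hb; apply: nb.
  exists b, \bot; split; first by apply/basic_s.
  by move=> y /basic_s hy [].
exists \top, a; split; first by apply/basic_ns.
by move=> y /basic_ns hy [].
Qed.

Lemma open_int S : is_open (int S).
Proof.
move=> x [a [b [hx hS]]]; exists a, b; split=> // y hy.
by exists a, b; split.
Qed.

Lemma int_sub S x : int S x -> S x.
Proof. by case=> a [b [h1 h2]]; apply: h2. Qed.

Lemma open_int_sub S x : is_open S -> S x -> int S x.
Proof. by move=> oS /oS. Qed.

Lemma sub_cl S x : S x -> cl S x.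
Proof. by move=> h a b hb; exists x. Qed.

Lemma cl_mono S T x : (forall y, S y -> T y) -> cl S x -> cl T x.
Proof. by move=> ST h a b /h [y [/ST hy hb]]; exists y. Qed.

Lemma closed_cl S : is_closed (cl S).
Proof.
move=> x nx.
have [a [b [hb H]]] : exists a b, basic a b x /\ ~ exists y, S y /\ basic a b y.
  apply: NNPP => H; apply: nx => a b hb; apply: NNPP => H'; apply: H; exists a, b; tauto.
exists a, b; split=> // y hy hcl; apply: H; exact: hcl _ _ hy.
Qed.

Lemma cl_closed C x : is_closed C -> cl C x -> C x.
Proof.
move=> cC hx; apply: NNPP => nx.
have [a [b [hb H]]] := cC x nx.
have [y [Cy by']] := hx a b hb; exact: H y by' Cy.
Qed.

Lemma cl_cl S x : cl (cl S) x -> cl S x.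
Proof. apply: cl_closed; exact: closed_cl. Qed.

Lemma cl_open_inter O V x : is_open O -> O x -> cl V x -> cl (fun y => O y /\ V y) x.
Proof.
move=> oO Ox hV a b hb.
have [a' [b' [hb' H]]] := oO x Ox.
have [y [Vy /basic_meet [h1 h2]]] := hV _ _ (proj2 (basic_meet _ _ _ _ _) (conj hb hb')).
by exists y; split=> //; split=> //; apply: H.
Qed.

Lemma open_ext U V : (forall x, U x <-> V x) -> is_open U -> is_open V.
Proof. by move=> H; rewrite (pext H). Qed.

Lemma closed_ext U V : (forall x, U x <-> V x) -> is_closed U -> is_closed V.
Proof. by move=> H; rewrite (pext H). Qed.

Theorem compact (I : Type) (f g : I -> A) :
  (forall x, exists i, basic (f i) (g i) x) ->
  exists J : list I, forall x, exists i, In i J /\ basic (f i) (g i) x.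
Proof.
move=> cov; apply: NNPP => nfin.
have H : forall J, exists x, forall i, In i J -> ~ basic (f i) (g i) x.
  move=> J; apply: NNPP => h; apply: nfin; exists J => x.
  apply: NNPP => h'; apply: h; exists x => i hi hb; apply: h'; by exists i.
pose Good p n := forall J, exists x, (forall a, In a p -> sset a x) /\
   (forall a, In a n -> ~ sset a x) /\ forall i, In i J -> ~ basic (f i) (g i) x.
have [P HP] : exists P : A -> Prop, ConsP Good P (fun c : A => ~ P c).
  apply: total_good.
  - move=> p n p' n' G hp hn J; have [x [h1 [h2 h3]]] := G J.
    exists x; split; [|split] => //; [move=> a /hp; apply: h1 | move=> a /hn; apply: h2].
  - move=> p n a G; apply: NNPP => /not_or_and [h1 h2].
    move/not_all_ex_not: h1 => [J1 h1]; move/not_all_ex_not: h2 => [J2 h2].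
    have [x [hp [hn hJ]]] := G (J1 ++ J2).
    case: (classic (sset a x)) => ha.
      apply: h1; exists x; split; [|split].
      + by move=> c [<-|/hp].
      + exact: hn.
      + by move=> i hi; apply: hJ; apply: in_or_app; left.
    apply: h2; exists x; split; [|split].
    + exact: hp.
    + by move=> c [<-|/hn].
    + by move=> i hi; apply: hJ; apply: in_or_app; right.
  - move=> J; have [x hx] := H J; exists x; split; [|split] => //.
have Gc : forall p n : list A, (forall a, In a p -> P a) -> (forall a, In a n -> ~ P a) -> ~ mt p <= jn n.
  move=> p n hp hn hle; have [x [h1 [h2 _]]] := HP p n hp hn nil.
  have /pf_jn [a [ha hx]] : sset (jn n) x by apply: pf_up hle (pf_mt h1).
  exact: h2 a ha hx.
pose y : X := exist _ P (prime_of_total Gc).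
have [i [hf hg]] := cov y.
have G : Good (f i :: nil) (g i :: nil).
  by apply: HP => a [<-|[]].
have [x [h1 [h2 h3]]] := G (i :: nil).
apply: (h3 i (or_introl erefl)); split; [apply: h1|apply: h2]; by left.
Qed.

Theorem compact_closed C (I : Type) (f g : I -> A) : is_closed C ->
  (forall x, C x -> exists i, basic (f i) (g i) x) ->
  exists J : list I, forall x, C x -> exists i, In i J /\ basic (f i) (g i) x.
Proof.
move=> cC cov.
pose I' := (I + {ab : A * A | forall y, basic ab.1 ab.2 y -> ~ C y})%type.
pose f' (s : I') := match s with inl i => f i | inr ab => (proj1_sig ab).1 end.
pose g' (s : I') := match s with inl i => g i | inr ab => (proj1_sig ab).2 end.
have [J' HJ'] : exists J' : list I', forall x, exists s, In s J' /\ basic (f' s) (g' s) x.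
  apply: compact => x; case: (classic (C x)) => Cx.
    by have [i hi] := cov x Cx; exists (inl i).
  have [a [b [hb H]]] := cC x Cx.
  by exists (inr (exist (fun ab : A * A => forall y, basic ab.1 ab.2 y -> ~ C y) (a, b) H)).
exists (flat_map (fun s : I' => match s with inl i => i :: nil | inr _ => nil end) J').
move=> x Cx; have [[i|[[a b] H]] [hs hb]] := HJ' x.
  by exists i; split=> //; apply/in_flat_map; exists (inl i); split=> //; left.
by case: (H x hb).
Qed.

Lemma compact_s C (Q : A -> Prop) : is_closed C ->
  (forall x, C x -> exists c, Q c /\ sset c x) ->
  exists l, (forall c, In c l -> Q c) /\ forall x, C x -> sset (jn l) x.
Proof.
move=> cC cov.
have cov' : forall x, C x -> exists s : {c | Q c}, basic (proj1_sig s) \bot x.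
  move=> x /cov [c [qc hc]]; exists (exist _ c qc); exact/basic_s.
have [J HJ] := compact_closed cC cov'.
exists (map (fun s : {c | Q c} => proj1_sig s) J); split.
  by move=> c /in_map_iff [[c' qc] [/= <- _]].
move=> x /HJ [[c qc] [hi /basic_s hx]].
apply: pf_up hx; apply: le_jn; apply/in_map_iff; by exists (exist _ c qc).
Qed.

Lemma compact_ns C (Q : A -> Prop) : is_closed C ->
  (forall x, C x -> exists c, Q c /\ ~ sset c x) ->
  exists l, (forall c, In c l -> Q c) /\ forall x, C x -> ~ sset (mt l) x.
Proof.
move=> cC cov.
have cov' : forall x, C x -> exists s : {c | Q c}, basic \top (proj1_sig s) x.
  move=> x /cov [c [qc hc]]; exists (exist _ c qc); exact/basic_ns.
have [J HJ] := compact_closed cC cov'.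
exists (map (fun s : {c | Q c} => proj1_sig s) J); split.
  by move=> c /in_map_iff [[c' qc] [/= <- _]].
move=> x /HJ [[c qc] [hi /basic_ns hx]] hm; apply: hx.
apply: pf_up hm; apply: mt_le; apply/in_map_iff; by exists (exist _ c qc).
Qed.

End Top.

Import Order.Theory.
Local Open Scope order_scope.

Section Pri.
Variables (d : Order.disp_t) (A : tbDistrLatticeType d).
Implicit Types (a b c : A) (l : list A).
Local Notation X := (pspace A).
Implicit Types (x y z : X) (S U V W C : X -> Prop).

Definition US (T : A -> Prop) : X -> Prop := fun y => exists s, T s /\ sset s y.

Lemma pf_le_trans x y z : pf_le x y -> pf_le y z -> pf_le x z.
Proof. by move=> h1 h2 a /h1 /h2. Qed.

Lemma pf_le_refl x : pf_le x x.
Proof. by []. Qed.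

Lemma notle x y : ~ pf_le x y -> exists c, sset c x /\ ~ sset c y.
Proof.
move=> H; apply: NNPP => H'; apply: H => a ha; apply: NNPP => hb; apply: H'.
by exists a.
Qed.

Lemma closed_compl U : is_open U -> is_closed (complP U).
Proof.
move=> oU; apply: open_ext oU => x; rewrite /complP; split; [tauto|exact: NNPP].
Qed.

Lemma open_compl C : is_closed C -> is_open (complP C).
Proof. by []. Qed.

Lemma upset_s a : upsetX (sset a).
Proof. by move=> x y h /h. Qed.

Lemma upset_up S : upsetX (up S).
Proof. move=> x y h [z [Sz hz]]; exists z; split=> //; exact: pf_le_trans h. Qed.

Lemma upset_compl_down S : upsetX (complP (down S)).
Proof.
move=> x y h nx [z [Sz hz]]; apply: nx; exists z; split=> //; exact: pf_le_trans hz.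
Qed.

Lemma open_upset_s W x : is_open W -> upsetX W -> W x ->
  exists c, sset c x /\ forall y, sset c y -> W y.
Proof.
move=> oW uW Wx.
have cov : forall y, complP W y -> exists c, (fun c => sset c x) c /\ ~ sset c y.
  move=> y ny; apply: notle => h; exact: ny (uW _ _ h Wx).
have [l [hl Hl]] := compact_ns (closed_compl oW) cov.
exists (mt l); split; first exact: pf_mt.
move=> y hy; apply: NNPP => ny; exact: Hl y ny hy.
Qed.

Lemma closed_upset_sep C y : is_closed C -> upsetX C -> ~ C y ->
  exists u, (forall x, C x -> sset u x) /\ ~ sset u y.
Proof.
move=> cC uC ny.
have cov : forall z, C z -> exists c, (fun c => ~ sset c y) c /\ sset c z.
  move=> z Cz; have [c [h1 h2]] : exists c, sset c z /\ ~ sset c y.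
    apply: notle => h; exact: ny (uC _ _ h Cz).
  by exists c.
have [l [hl Hl]] := compact_s cC cov.
exists (jn l); split=> // /pf_jn [c [hc hy]]; exact: hl c hc hy.
Qed.

Lemma closed_down C : is_closed C -> is_closed (down C).
Proof.
move=> cC y ny.
have cov : forall z, C z -> exists c, (fun c => sset c y) c /\ ~ sset c z.
  move=> z Cz; apply: notle => h; apply: ny; by exists z.
have [l [hl Hl]] := compact_ns cC cov.
exists (mt l), \bot; split; first by apply/basic_s; apply: pf_mt.
move=> w /basic_s hw [z [Cz hz]]; exact: Hl z Cz (hz _ hw).
Qed.

Lemma closed_up C : is_closed C -> is_closed (up C).
Proof.
move=> cC y ny.
have cov : forall z, C z -> exists c, (fun c => ~ sset c y) c /\ sset c z.
  move=> z Cz; have [c [h1 h2]] : exists c, sset c z /\ ~ sset c y.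
    apply: notle => h; apply: ny; by exists z.
  by exists c.
have [l [hl Hl]] := compact_s cC cov.
exists \top, (jn l); split.
  by apply/basic_ns => /pf_jn [c [hc hy]]; exact: hl c hc hy.
move=> w /basic_ns hw [z [Cz hz]]; exact: hw (hz _ (Hl z Cz)).
Qed.

Lemma clopen_upset_s U : clopen U -> upsetX U -> exists a, forall x, U x <-> sset a x.
Proof.
move=> [oU cU] uU.
have cov : forall y, complP U y -> exists c, (fun c => forall x, U x -> sset c x) c /\ ~ sset c y.
  move=> y ny; exact: closed_upset_sep cU uU ny.
have [l [hl Hl]] := compact_ns (closed_compl oU) cov.
exists (mt l) => x; split=> [Ux|hx]; first by apply: pf_mt => c /hl; apply.
by apply: NNPP => nx; exact: Hl x nx hx.
Qed.

Lemma clopen_basics U : clopen U ->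
  exists L : list (A * A), forall x, U x <-> exists ab, In ab L /\ basic ab.1 ab.2 x.
Proof.
move=> [oU cU].
pose I := {ab : A * A | forall y, basic ab.1 ab.2 y -> U y}.
have cov : forall x, U x -> exists s : I,
    basic (proj1_sig s).1 (proj1_sig s).2 x.
  move=> x Ux; have [a [b [hb H]]] := oU x Ux.
  by exists (exist (fun ab : A * A => forall y, basic ab.1 ab.2 y -> U y) (a, b) H).
have [J HJ] := compact_closed cU cov.
exists (map (fun s : I => proj1_sig s) J) => x; split.
  move=> Ux; have [[ab H] [hi hb]] := HJ x Ux.
  by exists ab; split=> //; apply/in_map_iff; exists (exist _ ab H).
case=> ab [/in_map_iff [[ab' H] [/= <- _]] hb]; exact: H.
Qed.

Lemma open_int1 S : is_open (int1 S).
Proof. exact (closed_down (closed_compl (@open_int _ _ S))). Qed.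

Lemma upset_int1 S : upsetX (int1 S).
Proof. exact: upset_compl_down. Qed.

Lemma int1_sub S x : int1 S x -> S x.
Proof.
move=> h; apply: int_sub; apply: NNPP => nx; apply: h; exists x; split=> //; exact: pf_le_refl.
Qed.

Lemma sub_int1 W S : is_open W -> upsetX W -> (forall x, W x -> S x) ->
  forall x, W x -> int1 S x.
Proof.
move=> oW uW WS x Wx [y [ny hy]]; apply: ny.
have [a [b [hb H]]] := oW y (uW _ _ hy Wx).
by exists a, b; split=> // z /H /WS.
Qed.

Lemma open_upset_le W1 W2 : is_open W1 -> upsetX W1 ->
  (forall c, (forall x, sset c x -> W1 x) -> (forall x, sset c x -> W2 x)) ->
  forall x, W1 x -> W2 x.
Proof.
move=> o1 u1 H x hx; have [c [hc Hc]] := open_upset_s o1 u1 hx.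
exact: H c Hc x hc.
Qed.

Lemma open_US T : is_open (US T).
Proof.
move=> x [s [Ts hs]]; exists s, \bot; split; first by apply/basic_s.
by move=> y /basic_s h; exists s.
Qed.

Lemma upset_US T : upsetX (US T).
Proof. by move=> x y h [s [Ts hs]]; exists s; split=> //; apply: h. Qed.

Lemma dist_cl T a : dist_join_at T a -> forall x, cl (US T) x <-> sset a x.
Proof.
move=> [[ub lub] dist] x; split=> [hx|hx].
  apply: NNPP => na.
  have [y [[s [Ts hs]] /basic_ns ny]] := hx _ _ (proj2 (basic_ns _ _) na).
  exact: ny (pf_up (ub s Ts) hs).
move=> p q [hp hq]; apply: NNPP => H.
have le : forall c, (exists s, T s /\ c = p `&` s) -> c <= q.
  move=> c [s [Ts ->]]; apply: NNPP => /sep [y [/sset_meet [h1 h2] h3]].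
  apply: H; exists y; split=> //; by exists s.
have := (proj2 (dist p)) q le.
by move/le_sset/(_ x (proj2 (sset_meet _ _ _) (conj hp hx))).
Qed.

Lemma dist_of_cl T a : (forall s, T s -> s <= a) ->
  (forall x, sset a x -> cl (US T) x) -> dist_join_at T a.
Proof.
move=> ub H; split.
  split=> // b hb; apply/le_sset => x hx; apply: NNPP => nb.
  have [y [[s [Ts hs]] /basic_ns ny]] := H x hx _ _ (proj2 (basic_ns _ _) nb).
  exact: ny (pf_up (hb s Ts) hs).
move=> b; split.
  by move=> c [s [Ts ->]]; apply: leI2 (lexx b) (ub s Ts).
move=> e he; apply/le_sset => x /sset_meet [hb ha]; apply: NNPP => ne.
have [y [[s [Ts hs]] [hby ney]]] := H x ha b e (conj hb ne).
apply: ney; apply: pf_up (he (b `&` s) _) (pf_meet hby hs); by exists s.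
Qed.

End Pri.

Import Order.Theory.
Local Open Scope order_scope.

Section Card.
Variable K : Type.

Lemma K_inh (T : Type) (S : T -> Prop) : lt_card S K -> inhabited K.
Proof.
move=> [_ noinj]; apply: NNPP => nK; apply: noinj.
exists (fun k => False_rect T (nK (inhabits k))); split=> k; case: (nK (inhabits k)).
Qed.

Lemma lt_card_ext (T : Type) (S S' : T -> Prop) : (forall x, S x <-> S' x) ->
  lt_card S K -> lt_card S' K.
Proof. by move=> H; rewrite (pext H). Qed.

Lemma lt_card_image (T T' : Type) (S : T -> Prop) (f : T -> T') :
  lt_card S K -> lt_card (fun y => exists x, S x /\ y = f x) K.
Proof.
move=> H; have [k0] := K_inh H; case: H => [[fi inj] noinj].
case: (classic (inhabited T)) => [[t0]|nT]; last first.
  split; first by exists (fun _ => k0) => y1 y2 [x]; case: (nT (inhabits x)).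
  by move=> [h [_ hin]]; have [x _] := hin k0; case: (nT (inhabits x)).
pose g y := epsilon (inhabits t0) (fun x => S x /\ y = f x).
have gspec : forall y, (exists x, S x /\ y = f x) -> S (g y) /\ y = f (g y).
  by move=> y h; apply: (epsilon_spec (inhabits t0) (fun x => S x /\ y = f x)).
split.
  exists (fun y => fi (g y)) => y1 y2 h1 h2 e.
  have [s1 e1] := gspec _ h1; have [s2 e2] := gspec _ h2.
  by rewrite e1 e2 (inj _ _ s1 s2 e).
move=> [h [hinj hin]]; apply: noinj; exists (fun k => g (h k)); split.
  move=> k l e; apply: hinj.
  by rewrite (proj2 (gspec _ (hin k))) (proj2 (gspec _ (hin l))) e.
by move=> k; exact: proj1 (gspec _ (hin k)).
Qed.

Lemma lt_card_single (T : Type) (t : T) : (exists f : nat -> K, forall m n, f m = f n -> m = n) ->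
  lt_card (fun y => y = t) K.
Proof.
move=> [fn finj]; split.
  by exists (fun _ => fn 0) => y1 y2 -> ->.
move=> [g [ginj gin]].
have := finj 0 1 (ginj _ _ (etrans (gin (fn 0)) (esym (gin (fn 1))))); by [].
Qed.

Lemma lt_card_prod (T1 T2 T3 : Type) (S1 : T1 -> Prop) (S2 : T2 -> Prop) (op : T1 -> T2 -> T3) :
  regular_card K -> lt_card S1 K -> lt_card S2 K ->
  lt_card (fun c => exists s t, S1 s /\ S2 t /\ c = op s t) K.
Proof.
move=> [_ reg] h1 h2.
pose FF := fun Z : T3 -> Prop => exists s, S1 s /\ Z = (fun c => exists t, S2 t /\ c = op s t).
have hm : forall Z, FF Z -> lt_card Z K.
  by move=> Z [s [S1s ->]]; apply: lt_card_image.
have := reg T3 FF (lt_card_image _ h1) hm.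
apply: lt_card_ext => c; split.
  by move=> [Z [[s [S1s ->]] [t [S2t ->]]]]; exists s, t.
move=> [s [t [S1s [S2t ->]]]]; exists (fun c => exists t, S2 t /\ c = op s t); split.
  by exists s.
by exists t.
Qed.

End Card.

Import Order.Theory.
Local Open Scope order_scope.

Section BL.
Variables (d : Order.disp_t) (A : tbDistrLatticeType d) (K : Type).
Implicit Types (a b c : A) (l : list A).
Local Notation X := (pspace A).
Implicit Types (x y z : X) (U V W C : X -> Prop) (D E : A -> Prop).

Definition Gen (S : A -> Prop) : A -> Prop :=
  fun c => forall E, D_ideal E -> (forall s, S s -> E s) -> E c.

Lemma Gen_ideal S : D_ideal (Gen S).
Proof.
split.
  by move=> c c' le h E hE hS; exact: (proj1 hE) c c' le (h E hE hS).
move=> T a hT ha E hE hS; case: (hE) => _ dj; apply: dj ha => t /hT; apply; [exact: hE|exact: hS].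
Qed.

Lemma Gen_sub (S : A -> Prop) s : S s -> Gen S s.
Proof. by move=> h E _ hS; apply: hS. Qed.

Lemma Gen_least (S E : A -> Prop) : D_ideal E -> (forall s, S s -> E s) -> forall c, Gen S c -> E c.
Proof. by move=> hE hS c; apply. Qed.

Definition Nz W : A -> Prop := fun c => forall x, sset c x -> W x.

Lemma Gen_eq S c : Gen S c <-> Nz (cl (US S)) c.
Proof.
split.
  apply: Gen_least.
    split.
      by move=> c1 c2 le h x hx; apply: h; apply: pf_up le hx.
    move=> T a hT ha x /(proj2 (dist_cl ha x)) hx.
    apply: cl_cl; apply: cl_mono hx => y [t [Tt ht]]; exact: hT t Tt y ht.
  by move=> s Ss x hx; apply: sub_cl; exists s.
move=> H E [dE dj] hS.
pose T := fun t => exists s, S s /\ t = c `&` s.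
apply: (dj T c).
  by move=> t [s [Ss ->]]; apply: dE (leIr _ _) (hS s Ss).
apply: dist_of_cl.
  by move=> t [s [Ss ->]]; apply: leIl.
move=> x hx; have := cl_open_inter (@open_s _ _ c) hx (H x hx).
apply: cl_mono => y [hc [s [Ss hs]]]; exists (c `&` s); split; first by exists s.
exact: pf_meet.
Qed.

Lemma Gen_single a : Gen (fun e : A => e = a) = principal a.
Proof.
apply: pext => c; split.
  apply: Gen_least; last by move=> s ->; rewrite /principal.
  split; first by move=> c1 c2 le h; apply: le_trans le h.
  by move=> T a' hT [[_ lub] _]; apply: lub.
move=> le E [dE _] hS; exact: dE le (hS a erefl).
Qed.

Lemma open_and U V : is_open U -> is_open V -> is_open (fun x => U x /\ V x).
Proof.
move=> oU oV x [Ux Vx].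
have [a [b [hb H]]] := oU x Ux; have [a' [b' [hb' H']]] := oV x Vx.
exists (a `&` a'), (b `|` b'); split; first by apply/basic_meet.
by move=> y /basic_meet [h1 h2]; split; [apply: H|apply: H'].
Qed.

Lemma Gen_meet S T : BL_meet (Gen S) (Gen T) =
  Gen (fun c => exists s t, S s /\ T t /\ c = s `&` t).
Proof.
apply: pext => c; split; last first.
  move=> h; split.
    apply: (Gen_least (Gen_ideal S)) h => _ [s [t [Ss [Tt ->]]]].
    by case: (Gen_ideal S) => dE _; apply: dE (leIl _ _) (Gen_sub Ss).
  apply: (Gen_least (Gen_ideal T)) h => _ [s [t [Ss [Tt ->]]]].
  by case: (Gen_ideal T) => dE _; apply: dE (leIr _ _) (Gen_sub Tt).
move=> [/Gen_eq hS /Gen_eq hT]; apply/Gen_eq => x hx.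
pose O := fun y => sset c y /\ US S y.
have oO : is_open O by apply: open_and; [apply: open_s|apply: open_US].
have h1 : cl O x := cl_open_inter (@open_s _ _ c) hx (hS x hx).
have h2 : cl (cl (fun y => O y /\ US T y)) x.
  apply: cl_mono h1 => y Oy; apply: cl_open_inter oO Oy (hT y (proj1 Oy)).
apply: cl_mono (cl_cl h2) => y [[_ [s [Ss hs]]] [t [Tt ht]]].
exists (s `&` t); split; [by exists s, t|exact: pf_meet].
Qed.

Definition G0 (D : A -> Prop) := exists S, lt_card S K /\ D = Gen S.

Lemma G0_kframe : regular_card K -> sub_kframe_containing_A K G0.
Proof.
move=> reg; split; [|split; [|split]].
- by move=> D [S [_ ->]]; apply: Gen_ideal.
- move=> a; exists (fun e : A => e = a); split; last by rewrite Gen_single.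
  exact: lt_card_single (proj1 reg).
- move=> D E [S [hS ->]] [T [hT ->]].
  eexists; split; last exact: Gen_meet.
  exact: lt_card_prod reg hS hT.
- move=> F hF hFc.
  pose sig D := epsilon (inhabits (fun _ : A => False)) (fun S => lt_card S K /\ D = Gen S).
  have sspec : forall D, F D -> lt_card (sig D) K /\ D = Gen (sig D).
    move=> D FD; apply: (epsilon_spec (inhabits (fun _ : A => False)) (fun S => lt_card S K /\ D = Gen S)).
    exact: hF D FD.
  pose FF := fun Z => exists D, F D /\ Z = sig D.
  exists (Defs.bigcupP FF); split.
    apply: (proj2 reg) (lt_card_image _ hFc) _.
    by move=> Z [D [FD ->]]; case: (sspec D FD).
  apply: pext => c; split=> h E hE hS.
    apply: (h E hE) => I FI y; rewrite (proj2 (sspec I FI)); apply: Gen_least hE _ y => s hs.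
    by apply: hS; exists (sig I); split=> //; exists I.
  apply: (h E hE) => s [Z [[D [FD ->]] hs]].
  have := Gen_sub hs; rewrite -(proj2 (sspec D FD)) => hD.
  exact: hS D FD s hD.
Qed.

Lemma BLk_G0 D : regular_card K -> BLk K D -> G0 D.
Proof. by move=> reg; apply; apply: G0_kframe. Qed.

Lemma G0_BLk S : lt_card S K -> BLk K (Gen S).
Proof.
move=> hS G [hD [hp [hm hj]]].
pose Fp := fun I => exists s, S s /\ I = principal s.
have -> : Gen S = BL_join Fp.
  apply: pext => c; split=> h E hE hI.
    apply: (h E hE) => s Ss; exact: hI _ (ex_intro _ s (conj Ss erefl)) s (lexx s).
  apply: (h E hE) => I [s [Ss ->]] y hy; case: hE => dE _; exact: dE hy (hI s Ss).
apply: hj; first by move=> I [s [Ss ->]]; apply: hp.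
exact: lt_card_image.
Qed.

Lemma BLk_meet D E : BLk K D -> BLk K E -> BLk K (BL_meet D E).
Proof. move=> hD hE G hG; case: (hG) => _ [_ [hm _]]; apply: hm; [apply: hD|apply: hE] => //. Qed.

Lemma BLk_top : BLk K (fun _ : A => True).
Proof.
move=> G [_ [hp _]]; have -> : (fun _ : A => True) = principal \top.
  by apply: pext => c; split=> // _; apply: lex1.
exact: hp.
Qed.

Lemma Nz_int1 S c : Nz (int1 S) c <-> Nz S c.
Proof.
split=> h x hx; first exact: int1_sub (h x hx).
apply: (sub_int1 (@open_s _ _ c) (@upset_s _ _ c) h) hx.
Qed.

Lemma Nz_Gen W S : is_open W -> upsetX W ->
  (Nz W = Gen S <-> forall x, W x <-> int1 (cl (US S)) x).
Proof.
move=> oW uW; split=> [H|H].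
  move=> x; split.
    apply: open_upset_le oW uW _ x => c hc.
    have hG : Gen S c by rewrite -H.
    exact: (proj2 (Nz_int1 _ c) (proj1 (Gen_eq _ _) hG)).
  apply: open_upset_le (@open_int1 _ _ _) (@upset_int1 _ _ _) _ x => c hc.
  have hG : Gen S c := proj2 (Gen_eq _ _) (proj1 (Nz_int1 _ _) hc).
  by rewrite -H in hG.
apply: pext => c; rewrite Gen_eq -[Nz (cl _) c]Nz_int1; split=> h x hx.
  by apply/(H x); apply: h.
by apply/(H x); apply: h.
Qed.

Lemma kclopen_US V0 : kclopen_upset K V0 -> exists S, lt_card S K /\ forall x, V0 x <-> US S x.
Proof.
move=> [F [hF [hcl ->]]].
pose g V := epsilon (inhabits (\top : A)) (fun a => forall x, V x <-> sset a x).
have gspec : forall V, F V -> forall x, V x <-> sset (g V) x.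
  move=> V FV; apply: (epsilon_spec (inhabits (\top : A)) (fun a => forall x, V x <-> sset a x)).
  by case: (hcl V FV) => c u; apply: clopen_upset_s.
exists (fun c => exists V, F V /\ c = g V); split; first exact: lt_card_image.
move=> x; split.
  move=> [V [FV Vx]]; exists (g V); split; first by exists V.
  exact/(gspec V FV).
move=> [_ [[V [FV ->]] hx]]; exists V; split=> //; exact/(gspec V FV).
Qed.

Lemma US_kclopen (S : A -> Prop) : lt_card S K -> kclopen_upset K (US S).
Proof.
move=> hS; exists (fun V => exists s, S s /\ V = sset s); split; first exact: lt_card_image.
split.
  move=> V [s [Ss ->]]; split; last exact: upset_s.
  by split; [apply: open_s|apply: closed_s].
apply: pext => x; split.
  by move=> [s [Ss hs]]; exists (sset s); split=> //; exists s.
by move=> [V [[s [Ss ->]] hs]]; exists s.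
Qed.

Lemma BLkX_iff W : BLkX K W <-> exists S : A -> Prop, lt_card S K /\ forall x, W x <-> int1 (cl (US S)) x.
Proof.
split.
  move=> [V [kV ->]]; have [S [hS HS]] := kclopen_US kV.
  by exists S; split=> //; rewrite (pext HS).
move=> [S [hS HS]]; exists (US S); split; first exact: US_kclopen.
exact: pext.
Qed.

Lemma BLk_Nz W : regular_card K -> is_open W -> upsetX W ->
  (BLk K (Nz W) <-> BLkX K W).
Proof.
move=> reg oW uW; split.
  move=> /(BLk_G0 reg) [S [hS eS]]; apply/BLkX_iff; exists S; split=> //.
  exact/(Nz_Gen _ oW uW).
move=> /BLkX_iff [S [hS HS]]; rewrite (proj2 (Nz_Gen _ oW uW) HS).
exact: G0_BLk.
Qed.

End BL.

Import Order.Theory.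
Local Open Scope order_scope.

Section Main.
Variables (d : Order.disp_t) (A : tbDistrLatticeType d) (K : Type).
Implicit Types (a b c : A) (l : list A).
Local Notation X := (pspace A).
Implicit Types (x y z : X) (U V W C : X -> Prop) (D E : A -> Prop).

Lemma clopen_s a : clopen (sset a).
Proof. by split; [apply: open_s|apply: closed_s]. Qed.

Lemma kcl_of_dist : (forall S : A -> Prop, lt_card S K -> exists a, dist_join_at S a) ->
  forall U, kclopen_upset K U -> clopen (cl U) /\ upsetX (cl U).
Proof.
move=> H U /kclopen_US [S [hS HS]].
have [a ha] := H S hS.
rewrite (pext HS) (pext (dist_cl ha)); split; [exact: clopen_s|exact: upset_s].
Qed.

Lemma dist_of_kcl : (forall U, kclopen_upset K U -> clopen (cl U) /\ upsetX (cl U)) ->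
  kappa_frame A K.
Proof.
move=> H S hS; have [cU uU] := H _ (US_kclopen hS).
have [a ha] := clopen_upset_s cU uU.
exists a; apply: dist_of_cl.
  move=> s Ss; apply/le_sset => x hx; apply/ha; apply: sub_cl; by exists s.
by move=> x /ha.
Qed.

Lemma complete_of_eod : extremally_order_disconnected A -> complete_lattice A.
Proof.
move=> eod S.
have [a ha] := clopen_upset_s (eod _ (@open_US _ _ S) (@upset_US _ _ S)) (@upset_up _ _ _).
exists a; split.
  move=> s Ss; apply/le_sset => x hx; apply/ha; exists x; split=> //.
  by apply: sub_cl; exists s.
move=> b hb; apply/le_sset => x /ha [z [hz hzx]]; apply: hzx.
apply: cl_closed (@closed_s _ _ b) _; apply: cl_mono hz => y [s [Ss hs]].
exact: pf_up (hb s Ss) hs.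
Qed.

Lemma eod_of_complete : complete_lattice A -> extremally_order_disconnected A.
Proof.
move=> compl U oU uU.
have [a [ub lub]] := compl (Nz U).
suff e : forall y, cl2 U y <-> sset a y by rewrite (pext e); apply: clopen_s.
have Ua : forall x, U x -> sset a x.
  move=> x Ux; have [c [hc Hc]] := open_upset_s oU uU Ux.
  exact: pf_up (ub c Hc) hc.
move=> y; split.
  move=> [z [hz hzy]]; apply: hzy; apply: cl_closed (@closed_s _ _ a) _.
  exact: cl_mono hz.
move=> hy; apply: NNPP => ny.
have [u [hu nu]] := closed_upset_sep (closed_up (@closed_cl _ _ U)) (@upset_up _ _ _) ny.
apply: nu; apply: pf_up hy; apply: lub => c Hc; apply/le_sset => x hx.
apply: hu; exists x; split; last exact: pf_le_refl.
by apply: sub_cl; apply: Hc.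
Qed.

Lemma heyting_dist : heyting_lattice A -> forall S a, is_join S a -> dist_join_at S a.
Proof.
move=> hey S a [ub lub]; split=> // b; split.
  by move=> c [s [Ss ->]]; apply: leI2 (lexx b) (ub s Ss).
move=> e he; have [i hi] := hey b e.
suff : a <= i by move/(proj2 (hi a)); rewrite meetC.
apply: lub => s Ss; apply/(hi s); rewrite meetC; apply: he; by exists s.
Qed.

Lemma hey_down : heyting_lattice A -> esakia_space A.
Proof.
move=> hey U [oU cU]; split; last exact: closed_down cU.
move=> x [y [Uy hxy]].
have [a [b [[ha nb] H]]] := oU y Uy.
have [i hi] := hey a b.
have iab : i `&` a <= b by apply/(hi i).
exists \top, i; split.
  apply/basic_ns => hix; apply: nb; apply: pf_up iab (pf_meet (hxy _ hix) ha).
move=> z /basic_ns niz.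
have cp : cons_pf (fun e => sset e z \/ e = a) (fun e => e = b).
  move=> p n hp hn hle.
  have [p' [hp' hpp]] := cut_list hp.
  apply: niz; apply: pf_up (pf_mt hp').
  apply/(hi (mt p')); rewrite meetC.
  have e1 : mt (a :: p') <= mt p by apply: mt_sub.
  have e2 : jn n <= b by apply: jn_le => e /hn ->.
  exact: le_trans e1 (le_trans hle e2).
have [w [hw1 hw2]] := pf_exists cp.
exists w; split.
  by apply: H; split; [apply: hw1; right|apply: hw2].
by move=> e he; apply: hw1; left.
Qed.

Lemma esakia_hey : esakia_space A -> heyting_lattice A.
Proof.
move=> es b c.
have cU : clopen (basic b c) by split; [apply: open_basic|apply: closed_basic].
have [oD cD] := es _ cU.
have cl' : clopen (complP (down (basic b c))).
  by split; [exact: cD|exact: closed_compl oD].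
have [i hi] := clopen_upset_s cl' (@upset_compl_down _ _ _).
exists i => a; split.
  move=> h; apply/le_sset => x hx; apply/hi => [[y [[hb nc] hxy]]].
  apply: nc; apply: pf_up h (pf_meet (hxy _ hx) hb).
move=> h; apply/le_sset => x /sset_meet [ha hb].
have /hi nD := pf_up h ha.
apply: NNPP => nc; apply: nD; exists x; split; last exact: pf_le_refl.
by split.
Qed.

Lemma kcomplete_of_kframe : kappa_frame A K -> kappa_complete A K.
Proof. by move=> kf S hS; have [a [ja _]] := kf S hS; exists a. Qed.

Definition Zab a b : X -> Prop := complP (down (basic a b)).

Lemma open_Zab a b : is_open (Zab a b).
Proof. exact (closed_down (@closed_basic _ _ a b)). Qed.

Lemma upset_Zab a b : upsetX (Zab a b).
Proof. exact: upset_compl_down. Qed.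

Lemma rel_ann_Nz a b : rel_ann a b = Nz (Zab a b).
Proof.
apply: pext => c; split.
  move=> h x hx [y [[ha nb] hxy]]; apply: nb.
  exact: pf_up h (pf_meet ha (hxy _ hx)).
move=> h; apply/le_sset => x /sset_meet [ha hc].
apply: NNPP => nb; apply: (h x hc); exists x; split; last exact: pf_le_refl.
by split.
Qed.

Lemma clopen_ind (P : (A -> Prop) -> Prop) U :
  (forall D E, P D -> P E -> P (BL_meet D E)) -> P (fun _ => True) ->
  (forall a b, P (rel_ann a b)) -> clopen U -> P (Nz (complP (down U))).
Proof.
move=> hm ht hr cU; have [L HL] := clopen_basics cU.
have -> : complP (down U) = (fun x => forall ab, In ab L -> Zab ab.1 ab.2 x).
  apply: pext => x; split.
    move=> nx ab hab [y [hy hxy]]; apply: nx; exists y; split=> //.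
    by apply/HL; exists ab.
  move=> h [y [/HL [ab [hab hy]] hxy]]; apply: (h ab hab); by exists y.
elim: L {HL} => [|ab L IH].
  suff -> : Nz (fun x => forall ab, In ab nil -> Zab ab.1 ab.2 x) = (fun _ => True) by [].
  by apply: pext => c; split=> // _ x _ ab [].
suff -> : Nz (fun x => forall ab', In ab' (ab :: L) -> Zab ab'.1 ab'.2 x) =
  BL_meet (rel_ann ab.1 ab.2) (Nz (fun x => forall ab, In ab L -> Zab ab.1 ab.2 x)).
  by apply: hm.
rewrite rel_ann_Nz; apply: pext => c; split.
  move=> h; split=> x hx; first exact: (h x hx ab (or_introl erefl)).
  by move=> ab' hab'; exact: (h x hx ab' (or_intror hab')).
move=> [h1 h2] x hx ab' [<-|hab']; first exact: (h1 x hx).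
exact: (h2 x hx ab' hab').
Qed.

Lemma sub_lbub (N : A -> Prop) c : N c -> lower_bounds (upper_bounds N) c.
Proof. by move=> h u; apply. Qed.

Lemma normal_meet D E : normal_ideal D -> normal_ideal E -> normal_ideal (BL_meet D E).
Proof.
move=> [dD eD] [dE eE]; split.
  by move=> c c' le [h1 h2]; split; [apply: dD le h1|apply: dE le h2].
apply: pext => c; split; first exact: sub_lbub.
move=> h; split.
  rewrite eD => u hu; apply: h => s [hs _]; exact: hu.
rewrite eE => u hu; apply: h => s [_ hs]; exact: hu.
Qed.

Lemma normal_top : normal_ideal (fun _ : A => True).
Proof.
split=> //; apply: pext => c; split=> // _ u; by apply.
Qed.

Lemma lbub_Nz W c : is_open W -> upsetX W ->
  lower_bounds (upper_bounds (Nz W)) c <-> Nz (cl2 W) c.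
Proof.
move=> oW uW.
have ub : forall u, upper_bounds (Nz W) u <-> (forall x, W x -> sset u x).
  move=> u; split.
    move=> h x Wx; have [e [he He]] := open_upset_s oW uW Wx.
    exact: pf_up (h e He) he.
  move=> h e he; apply/le_sset => x hx; exact: h x (he x hx).
split.
  move=> h x hx; apply: NNPP => nx.
  have [u [hu nu]] := closed_upset_sep (closed_up (@closed_cl _ _ W)) (@upset_up _ _ _) nx.
  apply: nu; apply: pf_up hx; apply: h; apply/ub => y Wy; apply: hu.
  by exists y; split; [apply: sub_cl|apply: pf_le_refl].
move=> h u /ub hu; apply/le_sset => x hx.
have [z [hz hzx]] := h x hx; apply: hzx.
apply: cl_closed (@closed_s _ _ u) _; exact: cl_mono hz.
Qed.

Lemma normal_Nz W : is_open W -> upsetX W ->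
  (normal_ideal (Nz W) <-> forall x, W x <-> int1 (cl2 W) x).
Proof.
move=> oW uW.
have key : forall c, Nz W c <-> lower_bounds (upper_bounds (Nz W)) c ->
     (Nz W c <-> Nz (int1 (cl2 W)) c).
  by move=> c h; rewrite Nz_int1 -lbub_Nz.
split.
  move=> [_ e] x; split.
    apply: open_upset_le oW uW _ x => c hc.
    by apply/(key c); [rewrite {1}e|].
  apply: open_upset_le (@open_int1 _ _ _) (@upset_int1 _ _ _) _ x => c hc.
  by apply/(key c); [rewrite {1}e|].
move=> H; split.
  by move=> c c' le h x hx; apply: h; apply: pf_up le hx.
apply: pext => c; rewrite (lbub_Nz _ oW uW) -[Nz (cl2 W) c]Nz_int1; split=> h x hx.
  by apply/(H x); apply: h.
by apply/(H x); apply: h.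
Qed.

End Main.

Theorem theorem5p21 (d : Order.disp_t) (A : tbDistrLatticeType d) (K : Type) :
  regular_card K ->
  (* (1) *)
  ((complete_lattice A /\ kappa_frame A K) <->
   (extremally_order_disconnected A /\
    forall U : pspace A -> Prop, kclopen_upset K U -> clopen (cl U) /\ upsetX (cl U))) /\
  (* (2) *)
  ((kappa_complete A K /\ heyting_lattice A) <->
   (esakia_space A /\
    forall U : pspace A -> Prop, kclopen_upset K U -> clopen (cl U) /\ upsetX (cl U))) /\
  (* (3) *)
  ((forall a b : A, BLk K (rel_ann a b)) <->
   (forall U : pspace A -> Prop, clopen U -> BLkX K (complP (down U)))) /\
  (* (4) *)
  ((forall a b : A, normal_ideal (rel_ann a b) /\ BLk K (rel_ann a b)) <->
   (forall U : pspace A -> Prop, clopen U ->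
      DM_set (complP (down U)) /\ BLkX K (complP (down U)))).
Proof.
move=> reg; split; [|split; [|split]].
- split.
    move=> [compl kf]; split; first exact: eod_of_complete.
    exact: kcl_of_dist.
  move=> [eod kcl]; split; first exact: complete_of_eod.
  exact: dist_of_kcl.
- split.
    move=> [kc hey]; split; first exact: hey_down.
    apply: kcl_of_dist => S hS; have [a ha] := kc S hS.
    by exists a; apply: heyting_dist.
  move=> [es kcl]; split; last exact: esakia_hey.
  exact: kcomplete_of_kframe (dist_of_kcl kcl).
- split.
    move=> H U cU.
    have oW : is_open (complP (down U)) := closed_down (proj2 cU).
    apply/(BLk_Nz reg oW (@upset_compl_down _ _ _)).
    apply: (clopen_ind (P := BLk K)) cU => //.
      by move=> D E; apply: BLk_meet.
    exact: BLk_top.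
  move=> H a b; rewrite rel_ann_Nz.
  apply/(BLk_Nz reg (@open_Zab _ _ a b) (@upset_Zab _ _ a b)).
  apply: H; split; [apply: open_basic|apply: closed_basic].
- split.
    move=> H U cU.
    have oW : is_open (complP (down U)) := closed_down (proj2 cU).
    have uW := @upset_compl_down _ _ U.
    have [hn hb] : normal_ideal (Nz (complP (down U))) /\ BLk K (Nz (complP (down U))).
      apply: (clopen_ind (P := fun D => normal_ideal D /\ BLk K D)) cU => //.
      + by move=> D E [n1 b1] [n2 b2]; split; [apply: normal_meet|apply: BLk_meet].
      + by split; [apply: normal_top|apply: BLk_top].
    split; last exact/(BLk_Nz reg oW uW).
    split=> //; split=> //; apply: pext => x.
    by rewrite (proj1 (normal_Nz oW uW) hn x).
  move=> H a b; rewrite rel_ann_Nz.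
  have cU : clopen (basic a b) by split; [apply: open_basic|apply: closed_basic].
  have [[_ [_ e]] hX] := H _ cU.
  split; last exact/(BLk_Nz reg (@open_Zab _ _ a b) (@upset_Zab _ _ a b)).
  apply/(normal_Nz (@open_Zab _ _ a b) (@upset_Zab _ _ a b)) => x.
  by rewrite /Zab e.
Qed.
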